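(* In Algorithm 1 (described in the context), for every triplet $(\mathrm{dist},\mathrm{seed},v_0)$ popped from the priority queue $Q$ there is a path from $\mathrm{seed}$ to $v_0$ in $G$ of length $\mathrm{dist}$.
   Context: Algorithm 1 (geodesic $k$ nearest labeled neighbours). Input: an undirected graph $G=(V,E,w)$ with non-negative weights, a set $\mathcal L\subseteq V$ of labeled vertices, and an integer $k\ge1$. It maintains a min-priority queue $Q$ of pairs $(\mathrm{seed},v)\in\mathcal L\times V$ with priorities (a popped pair with priority $\mathrm{dist}$ is called the triplet $(\mathrm{dist},\mathrm{seed},v)$), and for each $v\in V$ a list kNN$[v]$ (initially empty) and a set $S_v$ (initially empty). Initially, for each $s\in\mathcal L$, $(s,s)$ is inserted with priority $0$. While $Q$ is nonempty: pop the pair $(\mathrm{seed},v_0)$ of minimum priority $\mathrm{dist}$; add $\mathrm{seed}$ to $S_{v_0}$; if kNN$[v_0]$ has fewer than $k$ entries, append $(\mathrm{dist},\mathrm{seed})$ to kNN$[v_0]$ and, for every neighbour $v$ of $v_0$ such that kNN$[v]$ has fewer than $k$ entries and $\mathrm{seed}\notin S_v$, perform decrease-or-insert of $(\mathrm{seed},v)$ with priority $\mathrm{dist}+w(v_0,v)$ (if the pair is in $Q$ its priority is lowered to this value when smaller; otherwise it is inserted). *)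

(* Defs.v *)
From HB Require Import structures.
From mathcomp Require Import all_boot all_order all_algebra.
Set Implicit Arguments. Unset Strict Implicit. Unset Printing Implicit Defensive.
Import Order.TTheory GRing.Theory Num.Theory.
Local Open Scope ring_scope.

Section Algo.
Variables (V : finType) (R : realDomainType).
(* undirected graph: adjacency relation [e] (assumed symmetric in the theorem)
   and edge weights [w] (assumed symmetric and non-negative on edges). *)
Variables (e : rel V) (w : V -> V -> R) (L : {set V}) (k : nat).

(* State of Algorithm 1.
   [pq s v = Some p]  : the pair (seed s, vertex v) is in Q with priority p;
   [knn v]            : the list kNN[v];
   [sv v]             : the set S_v. *)
Record state := State {
  pq : V -> V -> option R;
  knn : V -> seq (R * V);
  sv : V -> {set V}
}.

Definition init_state : state :=
  State (fun s v => if (s \in L) && (v == s) then Some 0 else None)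
        (fun _ => [::]) (fun _ => set0).

Definition pop_min (st : state) (seed v0 : V) (dist : R) : Prop :=
  pq st seed v0 = Some dist /\
  forall s' v' d', pq st s' v' = Some d' -> dist <= d'.

Definition dec_ins (o : option R) (x : R) : R :=
  if o is Some p then Num.min p x else x.

Definition after_pop (st : state) (seed v0 : V) (dist : R) : state :=
  let Q1 := fun s' v' => if (s' == seed) && (v' == v0) then None else pq st s' v' in
  let S1 := fun x => if x == v0 then seed |: sv st x else sv st x in
  if (size (knn st v0) < k)%N then
    let K1 := fun x => if x == v0 then rcons (knn st x) (dist, seed) else knn st x in
    let Q2 := fun s' v =>
      if [&& s' == seed, e v0 v, (size (K1 v) < k)%N & seed \notin S1 v]
      then Some (dec_ins (Q1 seed v) (dist + w v0 v))
      else Q1 s' v in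
    State Q2 K1 S1
  else State Q1 (knn st) S1.

Inductive reachable : state -> Prop :=
| reach_init : reachable init_state
| reach_step st seed v0 dist :
    reachable st -> pop_min st seed v0 dist ->
    reachable (after_pop st seed v0 dist).

Definition popped (dist : R) (seed v0 : V) : Prop :=
  exists st, reachable st /\ pop_min st seed v0 dist.

End Algo.

Definition walk_len (V : Type) (R : nmodType) (w : V -> V -> R) (x : V) (p : seq V) : R :=
  \sum_(ij <- zip (x :: p) p) w ij.1 ij.2.

(* Main.v *)
Require Import Defs.
From mathcomp Require Import all_boot all_order all_algebra.
Import Order.TTheory GRing.Theory Num.Theory.
Local Open Scope ring_scope.

Definition good (V : finType) (R : realDomainType) (e : rel V) (w : V -> V -> R)
  (S : V -> {set V}) (s v : V) (d : R) :=
  exists p : seq V, [/\ path e s p, last s p = v, uniq (s :: p),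
     walk_len w s p = d & forall x, x \in belast s p -> s \in S x].
Arguments good {V R}.

Lemma good_mono (V : finType) (R : realDomainType) (e : rel V) (w : V -> V -> R)
  (S S' : V -> {set V}) s v d :
  (forall x, S x \subset S' x) -> good e w S s v d -> good e w S' s v d.
Proof.
move=> sub [p [h1 h2 h3 h4 h5]]; exists p; split=> // x /h5.
by move/(subsetP (sub x)).
Qed.

Lemma walk_len_rcons (V : Type) (R : nmodType) (w : V -> V -> R) s p v :
  walk_len w s (rcons p v) = walk_len w s p + w (last s p) v.
Proof.
elim: p s => [|x p IH] s /=.
  by rewrite /walk_len /= big_cons big_nil add0r addr0.
by rewrite /walk_len /= !big_cons -/(walk_len w x _) IH addrA.
Qed.

Lemma inv_reach (V : finType) (R : realDomainType) (e : rel V)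
    (w : V -> V -> R) (L : {set V}) (k : nat) (st : state V R) :
  @reachable V R e w L k st ->
  forall s v d, pq st s v = Some d -> good e w (sv st) s v d.
Proof.
elim=> [|{}st seed v0 dist _ IH [Hpop _]].
  move=> s v d; rewrite /init_state /=; case: ifP => // /andP [_ /eqP ->] [<-].
  exists [::]; split => //=; first by rewrite /walk_len big_nil.
have subS : forall x, sv st x \subset
   (fun x => if x == v0 then seed |: sv st x else sv st x) x.
  by move=> x; case: ifP => // _; exact: subsetUr.
have Q1good : forall s v d,
   (if (s == seed) && (v == v0) then None else pq st s v) = Some d ->
   good e w (fun x => if x == v0 then seed |: sv st x else sv st x) s v d.
  move=> s v d; case: ifP => // _ /IH; exact: good_mono.
rewrite /after_pop; case: ifP => _ /=; last exact: Q1good.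
move=> s v d; case: ifP; last by move=> _; exact: Q1good.
case/and4P=> /eqP -> ev0v _ notin.
have newgood : good e w (fun x => if x == v0 then seed |: sv st x else sv st x)
                 seed v (dist + w v0 v).
  have [p [h1 h2 h3 h4 h5]] := IH _ _ _ Hpop.
  have Hin : forall x, x \in seed :: p ->
     seed \in (if x == v0 then seed |: sv st x else sv st x).
    move=> x; rewrite lastI mem_rcons inE h2 => /orP [/eqP ->|/h5 hx].
      by rewrite eqxx setU11.
    by case: ifP => _ //; rewrite in_setU hx orbT.
  exists (rcons p v); split.
  - by rewrite rcons_path h1 h2.
  - by rewrite last_rcons.
  - rewrite -rcons_cons rcons_uniq h3 andbT.
    by apply/negP => /Hin; rewrite (negbTE notin).
  - by rewrite walk_len_rcons h4 h2.
  - by move=> x; rewrite belast_rcons => /Hin.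
move=> [<-]; rewrite /dec_ins.
case E: (if (seed == seed) && (v == v0) then None else pq st seed v) => [p|] //.
rewrite /Num.min; case: ifP => _ //; exact: Q1good.
Qed.

Theorem lemmaB2 (V : finType) (R : realDomainType) (e : rel V)
    (w : V -> V -> R) (L : {set V}) (k : nat) :
  symmetric e ->
  (forall x y, e x y -> w x y = w y x) ->
  (forall x y, e x y -> 0 <= w x y) ->
  (0 < k)%N ->
  forall (dist : R) (seed v0 : V),
    popped e w L k dist seed v0 ->
    exists p : seq V,
      [/\ path e seed p, last seed p = v0, uniq (seed :: p)
        & walk_len w seed p = dist].
Proof.
move=> _ _ _ _ dist seed v0 [st [Hr [Hp _]]].
have [p [h1 h2 h3 h4 _]] := @inv_reach V R e w L k st Hr _ _ _ Hp.
by exists p; split.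
Qed.
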